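(* Fix $n\ge2$. There exists a sequence $\{(\mathcal{F}_k,M_k)\}_{k\ge0}$ where each $\mathcal{F}_k$ is a simplicial polyhedral fan in $\mathbb{R}^n$ based on the columns of a real matrix $M_k$ with $n$ rows, such that $$\operatorname{diam}\bigl(\mathcal{G}(\mathcal{F}_k)\bigr)=2^{k+1}-1=2\left(\frac{\Delta(M_k)}{\Delta_{\min}(\mathcal{F}_k,M_k)}\right)^{1/\log_2 n}-1.$$
   Context: A polyhedral fan in $\mathbb{R}^n$ is a family $\mathcal{F}$ of polyhedral cones such that every face of a member is a member, the intersection of any two members is a common face of both, and there are no inclusion-maximal members of dimension less than $n$. It is simplicial if each $n$-dimensional member is a simplicial cone. It is based on the columns of $M\in\mathbb{R}^{n\times p}$ if each member is $\operatorname{cone}(M_{*\mathcal{F}})$ for some set $\mathcal{F}$ of column indices. $\Gamma_n(\mathcal{F})$ denotes the set of $n$-dimensional members. The graph $\mathcal{G}(\mathcal{F})$ has vertex set $\Gamma_n(\mathcal{F})$ and an edge between $\mathcal{F}_1,\mathcal{F}_2$ iff $\dim(\mathcal{F}_1\cap\mathcal{F}_2)=n-1$. For a simplicial fan, $\Delta_{\min}(\mathcal{F},M)=\min_{\mathcal{F}\in\Gamma_n(\mathcal{F})}|\det M_{*\mathcal{F}}|$, where $\mathcal{F}$ is the set of $n$ column indices generating the cone. $\Delta(M)$ is the maximum absolute value of $n\times n$ minors of $M$. *)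

(* Defs.v *)
From HB Require Import structures.
From mathcomp Require Import all_boot all_order all_algebra.
From mathcomp Require Import boolp reals exp.
Set Implicit Arguments. Unset Strict Implicit. Unset Printing Implicit Defensive.
Import Order.TTheory GRing.Theory Num.Theory.
Local Open Scope ring_scope.

Section Fans.
Variable R : realType.
Variables n p : nat.

Definition vset := 'cV[R]_n -> Prop.

Definition mcone (M : 'M[R]_(n, p)) (S : {set 'I_p}) : vset :=
  fun x => exists lam : 'cV[R]_p,
    (forall j, 0 <= lam j 0) /\ (forall j, j \notin S -> lam j 0 = 0) /\ x = M *m lam.

Definition vsubset (X Y : vset) := forall x, X x -> Y x.
Definition vinter (X Y : vset) : vset := fun x => X x /\ Y x.
Definition veq (X Y : vset) := forall x, X x <-> Y x.

Definition is_face (F C : vset) :=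
  exists c : 'cV[R]_n, (forall y, C y -> 0 <= (c^T *m y) 0 0) /\
    veq F (fun x => C x /\ (c^T *m x) 0 0 = 0).

(* X has dimension d: the linear span of X has dimension d. *)
Definition has_dim (X : vset) (d : nat) :=
  (exists B : 'M[R]_(n, d), \rank B = d /\ forall j, X (col j B)) /\
  (forall B : 'M[R]_(n, d.+1), (forall j, X (col j B)) -> (\rank B <= d)%N).

Definition is_fan (M : 'M[R]_(n, p)) (Fam : {set {set 'I_p}}) :=
  [/\ (forall S T, S \in Fam -> T \in Fam -> veq (mcone M S) (mcone M T) -> S = T),
      (forall S F, S \in Fam -> is_face F (mcone M S) ->
          exists2 T, T \in Fam & veq (mcone M T) F),
      (forall S T, S \in Fam -> T \in Fam ->
          is_face (vinter (mcone M S) (mcone M T)) (mcone M S) /\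
          is_face (vinter (mcone M S) (mcone M T)) (mcone M T)) &
      (forall S, S \in Fam ->
          (forall T, T \in Fam -> vsubset (mcone M S) (mcone M T) ->
              veq (mcone M S) (mcone M T)) ->
          has_dim (mcone M S) n)].

(* simplicial: each n-dimensional member is generated by exactly n columns
   (which are then linearly independent). *)
Definition is_simplicial (M : 'M[R]_(n, p)) (Fam : {set {set 'I_p}}) :=
  forall S, S \in Fam -> has_dim (mcone M S) n -> #|S| = n.

Definition Gamma_n (M : 'M[R]_(n, p)) (Fam : {set {set 'I_p}}) (S : {set 'I_p}) :=
  S \in Fam /\ has_dim (mcone M S) n.

Definition fan_adj (M : 'M[R]_(n, p)) (S T : {set 'I_p}) :=
  has_dim (vinter (mcone M S) (mcone M T)) n.-1.

Definition absdet (M : 'M[R]_(n, p)) (S : {set 'I_p}) : R :=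
  \big[Num.max/0]_(f : {ffun 'I_n -> 'I_p} | f @: setT == S) `|\det (colsub f M)|.

Definition Delta (M : 'M[R]_(n, p)) : R :=
  \big[Num.max/0]_(f : {ffun 'I_n -> 'I_p}) `|\det (colsub f M)|.

(* Delta_min(F, M) (the initial value Delta M is >= every term, so this is
   the minimum over Gamma_n whenever Gamma_n is nonempty) *)
Definition Delta_min (M : 'M[R]_(n, p)) (Fam : {set {set 'I_p}}) : R :=
  \big[Num.min/Delta M]_(S in Fam | `[< has_dim (mcone M S) n >]) absdet M S.
End Fans.

Section Graph.
Variable T : Type.
Variables (V : T -> Prop) (e : T -> T -> Prop).

Fixpoint reach (k : nat) (u v : T) : Prop :=
  match k with
  | 0 => u = v
  | k'.+1 => reach k' u v \/ exists w, V w /\ reach k' u w /\ e w v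
  end.

Definition graph_diam (d : nat) :=
  (forall u v, V u -> V v -> reach d u v) /\
  (forall d', (forall u v, V u -> V v -> reach d' u v) -> (d <= d')%N).
End Graph.

(* Main.v *)
Require Import Defs.
From HB Require Import structures.
From mathcomp Require Import all_boot all_order all_algebra.
From mathcomp Require Import boolp reals exp.
From mathcomp Require Import zify ring lra.
From mathcomp Require Import fingroup perm.
Set Implicit Arguments. Unset Strict Implicit. Unset Printing Implicit Defensive.
Import Order.TTheory GRing.Theory Num.Theory.
Local Open Scope ring_scope.

Section General.
Variable R : realType.
Variables n p : nat.
Variable M : 'M[R]_(n, p).

Definition cval (c : 'cV[R]_n) (j : 'I_p) : R := \sum_i c i 0 * M i j.
Definition dvec (j : 'I_p) : 'cV[R]_p := \col_k ((k == j)%:R).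

Lemma ctx (c : 'cV[R]_n) (lam : 'cV[R]_p) :
  (c^T *m (M *m lam)) 0 0 = \sum_j lam j 0 * cval c j.
Proof.
rewrite mulmxA !mxE; apply: eq_bigr => j _; rewrite mulrC !mxE /cval.
by congr (_ * _); apply: eq_bigr => i _; rewrite !mxE.
Qed.

Lemma sum_delta (j : 'I_p) (F : 'I_p -> R) : \sum_k F k * (k == j)%:R = F j.
Proof.
rewrite (bigD1 j) //= eqxx mulr1 big1 ?addr0 // => k /negbTE ->; by rewrite mulr0.
Qed.

Lemma sum_delta' (j : 'I_p) (F : 'I_p -> R) : \sum_k (k == j)%:R * F k = F j.
Proof. rewrite -[RHS](sum_delta j F); apply: eq_bigr => k _; by rewrite mulrC. Qed.

Lemma gen_col j : M *m dvec j = col j M.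
Proof. apply/matrixP => i l; rewrite !mxE; under eq_bigr do rewrite mxE; by rewrite sum_delta. Qed.

Lemma ctx_dvec c j : (c^T *m (M *m dvec j)) 0 0 = cval c j.
Proof. rewrite ctx; under eq_bigr do rewrite mxE; by rewrite sum_delta'. Qed.

Lemma cone_gen (S : {set 'I_p}) j : j \in S -> mcone M S (M *m dvec j).
Proof.
move=> jS; exists (dvec j); split=> [k|]; last split=> // k kS; rewrite mxE.
  by rewrite ler0n.
by case: eqP kS => // ->; rewrite jS.
Qed.

Lemma cone_sub (S T : {set 'I_p}) : S \subset T -> vsubset (mcone M S) (mcone M T).
Proof.
move=> sST x [lam [h1 [h2 h3]]]; exists lam; split=> //; split=> // j jT.
by apply: h2; apply: contra jT; apply: (subsetP sST).
Qed.

Lemma cone_eq (S T : {set 'I_p}) : S = T -> veq (mcone M S) (mcone M T).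
Proof. by move=> ->. Qed.

Lemma cval_ge0 S c : (forall y, mcone M S y -> 0 <= (c^T *m y) 0 0) ->
  forall j, j \in S -> 0 <= cval c j.
Proof. move=> h j jS; rewrite -ctx_dvec; exact/h/cone_gen. Qed.

Lemma face_lemma S c : (forall y, mcone M S y -> 0 <= (c^T *m y) 0 0) ->
  veq (fun x => mcone M S x /\ (c^T *m x) 0 0 = 0)
      (mcone M [set j in S | cval c j == 0]).
Proof.
move=> hc; have cv := cval_ge0 hc.
move=> x; split.
  move=> [[lam [h1 [h2 ->]]] h0]; exists lam; split=> //; split=> // j.
  rewrite inE negb_and => /orP [/h2 //|cj].
  move: h0; rewrite ctx => h0.
  have hz : lam j 0 * cval c j = 0.
    apply: (@psumr_eq0P _ _ predT (fun j => lam j 0 * cval c j) _ h0 j erefl).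
    move=> i _; case: (boolP (i \in S)) => iS.
      by rewrite mulr_ge0 // cv.
    by rewrite h2 // mul0r.
  by move/eqP: hz; rewrite mulf_eq0 (negbTE cj) orbF => /eqP.
move=> [lam [h1 [h2 ->]]]; split.
  exists lam; split=> //; split=> // j jS; apply: h2; by rewrite inE (negbTE jS).
rewrite ctx big1 // => j _; case: (boolP (j \in [set j in S | cval c j == 0])).
  by rewrite inE => /andP [_ /eqP ->]; rewrite mulr0.
by move/h2 ->; rewrite mul0r.
Qed.

Lemma sep_inter (S T : {set 'I_p}) c :
  (forall j, j \in S -> j \notin T -> 0 < cval c j) ->
  (forall j, j \in T -> j \notin S -> cval c j < 0) ->
  (forall j, j \in S -> j \in T -> cval c j = 0) ->
  vsubset (vinter (mcone M S) (mcone M T)) (mcone M (S :&: T)).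
Proof.
move=> hp hn hz x [[lam [l1 [l2 lx]]] [mu [m1 [m2 mx]]]].
have s1 : 0 <= \sum_j lam j 0 * cval c j.
  apply: sumr_ge0 => j _; case: (boolP (j \in S)) => jS; last by rewrite l2 // mul0r.
  case: (boolP (j \in T)) => jT; first by rewrite hz // mulr0.
  by rewrite mulr_ge0 // ltW // hp.
have s2 : \sum_j mu j 0 * cval c j <= 0.
  rewrite -oppr_ge0 -sumrN; apply: sumr_ge0 => j _.
  case: (boolP (j \in T)) => jT; last by rewrite m2 // mul0r oppr0.
  case: (boolP (j \in S)) => jS; first by rewrite hz // mulr0 oppr0.
  by rewrite -mulrN mulr_ge0 // oppr_ge0 ltW // hn.
have e : \sum_j lam j 0 * cval c j = \sum_j mu j 0 * cval c j by rewrite -!ctx -lx -mx.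
have z : \sum_j lam j 0 * cval c j = 0 by apply/eqP; rewrite eq_le s1 e s2.
exists lam; split=> //; split=> // j; rewrite inE negb_and => /orP [/l2 //|jT].
case: (boolP (j \in S)) => jS; last by rewrite l2.
have hz0 : lam j 0 * cval c j = 0.
  apply: (@psumr_eq0P _ _ predT (fun j => lam j 0 * cval c j) _ z j erefl).
  move=> i _; case: (boolP (i \in S)) => iS; last by rewrite l2 // mul0r.
  case: (boolP (i \in T)) => iT; first by rewrite hz // mulr0.
  by rewrite mulr_ge0 // ltW // hp.
move/eqP: hz0; rewrite mulf_eq0 => /orP [/eqP //|/eqP h].
by move: (hp j jS jT); rewrite h ltxx.
Qed.


Lemma rank_cone (S : {set 'I_p}) d (B : 'M[R]_(n, d)) :
  (forall l, mcone M S (col l B)) -> (\rank B <= #|S|)%N.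
Proof.
move=> hB.
have lamf : forall l, {lam : 'cV[R]_p | (forall j, j \notin S -> lam j 0 = 0) /\ col l B = M *m lam}.
  move=> l; have [lam [_ [h2 h3]]] := cid (hB l); by exists lam.
pose Lam : 'M[R]_(p, d) := \matrix_(k, l) (sval (lamf l)) k 0.
have eB : B = M *m Lam.
  apply/matrixP => i l; have [_ e] := svalP (lamf l).
  have := congr1 (fun A : 'cV[R]_n => A i 0) e; rewrite !mxE => ->.
  by apply: eq_bigr => k _; rewrite /Lam mxE.
pose Q : 'M[R]_(p, #|S|) := \matrix_(k, l) ((k == enum_val l)%:R).
pose LS : 'M[R]_(#|S|, d) := \matrix_(l, c) Lam (enum_val l) c.
have eL : Lam = Q *m LS.
  apply/matrixP => k c; rewrite !mxE.
  under eq_bigr do rewrite !mxE.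
  case: (boolP (k \in S)) => kS.
    rewrite (bigD1 (enum_rank_in kS k)) //= enum_rankK_in // eqxx mul1r.
    rewrite big1 ?addr0 // => l /negbTE lk.
    case: eqP => [e|]; last by rewrite mul0r.
    have := enum_valK_in kS l; rewrite -e => h.
    by move: lk; rewrite h eqxx.
  rewrite big1; last first.
    move=> l _; case: eqP => [e|]; last by rewrite mul0r.
    by move: kS; rewrite e enum_valP.
  by rewrite /Lam ?mxE; have [h _] := svalP (lamf c); rewrite h.
rewrite eB eL mulmxA; apply: leq_trans (mxrankM_maxl _ _) _; exact: rank_leq_col.
Qed.

Lemma has_dim_le (S : {set 'I_p}) d : has_dim (mcone M S) d -> (d <= #|S|)%N.
Proof. by move=> [[B [rB hB]] _]; rewrite -rB; apply: rank_cone. Qed.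

Lemma has_dim_veq (X Y : vset R n) d : veq X Y -> has_dim X d -> has_dim Y d.
Proof.
move=> e [[B [rB hB]] h]; split; first by exists B; split=> // j; apply/e.
by move=> B' hB'; apply: h => j; apply/e.
Qed.

Lemma veq_sym (X Y : vset R n) : veq X Y -> veq Y X.
Proof. by move=> e x; split=> /e. Qed.

Lemma veq_trans (X Y Z : vset R n) : veq X Y -> veq Y Z -> veq X Z.
Proof. by move=> e1 e2 x; split=> [/e1/e2|/e2/e1]. Qed.

Lemma vinterC (X Y : vset R n) : veq (vinter X Y) (vinter Y X).
Proof. by move=> x; split=> [[]|[]]. Qed.

Section Dual.
Variable S0 : {set 'I_p}.
Variable phi : 'I_p -> 'cV[R]_n.
Hypothesis hphi : forall i j, i \in S0 -> j \in S0 -> cval (phi i) j = (i == j)%:R.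

Lemma dual_coef (lam : 'cV[R]_p) i : (forall j, j \notin S0 -> lam j 0 = 0) -> i \in S0 ->
  ((phi i)^T *m (M *m lam)) 0 0 = lam i 0.
Proof.
move=> hl iS; rewrite ctx (bigD1 i) //= hphi // eqxx mulr1 big1 ?addr0 // => j ji.
case: (boolP (j \in S0)) => jS; last by rewrite hl // mul0r.
by rewrite hphi // eq_sym (negbTE ji) mulr0.
Qed.

Lemma dual_inter (A B : {set 'I_p}) : A \subset S0 -> B \subset S0 ->
  vsubset (vinter (mcone M A) (mcone M B)) (mcone M (A :&: B)).
Proof.
move=> sA sB x [[lam [l1 [l2 lx]]] [mu [m1 [m2 mx]]]].
have lS : forall j, j \notin S0 -> lam j 0 = 0.
  by move=> j jS; apply: l2; apply: contra jS; apply: (subsetP sA).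
have mS : forall j, j \notin S0 -> mu j 0 = 0.
  by move=> j jS; apply: m2; apply: contra jS; apply: (subsetP sB).
have e : forall j, lam j 0 = mu j 0.
  move=> j; case: (boolP (j \in S0)) => jS; last by rewrite lS ?mS.
  by rewrite -(dual_coef lS jS) -(dual_coef mS jS) -lx -mx.
exists lam; split=> //; split=> // j; rewrite inE negb_and => /orP [/l2 //|/m2].
by rewrite e.
Qed.

Lemma cval_sum (I : finType) (P : pred I) (F : I -> 'cV[R]_n) j :
  cval (\sum_(i | P i) F i) j = \sum_(i | P i) cval (F i) j.
Proof.
rewrite /cval; under eq_bigr do rewrite summxE big_distrl /=.
by rewrite exchange_big.
Qed.

Lemma dual_face (A S : {set 'I_p}) : A \subset S -> S \subset S0 ->
  exists c : 'cV[R]_n, (forall y, mcone M S y -> 0 <= (c^T *m y) 0 0) /\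
    veq (mcone M A) (fun x => mcone M S x /\ (c^T *m x) 0 0 = 0).
Proof.
move=> sAS sS0; pose c := \sum_(i in S0 :\: A) phi i.
have cv : forall j, j \in S0 -> cval c j = (j \in S0 :\: A)%:R.
  move=> j jS; rewrite cval_sum.
  case: (boolP (j \in S0 :\: A)) => jD.
    rewrite (bigD1 j) //= big1 ?addr0 ?hphi ?eqxx // => i /andP [iD ij].
    have iS : i \in S0 by move: iD; rewrite inE => /andP [].
    by rewrite hphi // (negbTE ij).
  rewrite big1 // => i iD.
  have iS : i \in S0 by move: iD; rewrite inE => /andP [].
  rewrite hphi //.
  by case: eqP => // e; move: jD; rewrite -e iD.
have hc : forall y, mcone M S y -> 0 <= (c^T *m y) 0 0.
  move=> y [lam [l1 [l2 ->]]]; rewrite ctx; apply: sumr_ge0 => j0 _.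
  case: (boolP (j0 \in S)) => jS; last by rewrite l2 // mul0r.
  by rewrite cv ?(subsetP sS0) // mulr_ge0 // ler0n.
exists c; split=> //.
apply: veq_trans (veq_sym (face_lemma hc)); apply: cone_eq.
apply/setP => j; rewrite inE; case: (boolP (j \in S)) => jS /=; last first.
  by apply/negbTE; apply: contra jS; apply: (subsetP sAS).
rewrite cv ?(subsetP sS0) // !inE (subsetP sS0) //= andbT.
by case: (j \in A); rewrite /= ?eqxx ?oner_eq0.
Qed.

Lemma dual_has_dim (A : {set 'I_p}) : A \subset S0 -> has_dim (mcone M A) #|A|.
Proof.
move=> sA; split; last by move=> B hB; apply: rank_cone.
pose B : 'M[R]_(n, #|A|) := \matrix_(i, l) M i (enum_val l).
exists B; split; last first.
  move=> l; have -> : col l B = M *m dvec (enum_val l).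
    by rewrite gen_col; apply/matrixP => i j; rewrite !mxE.
  exact/cone_gen/enum_valP.
apply/eqP; rewrite eqn_leq rank_leq_col /=.
pose Phi : 'M[R]_(#|A|, n) := \matrix_(l, i) (phi (enum_val l)) i 0.
have e : Phi *m B = 1%:M.
  apply/matrixP => l l'; rewrite !mxE.
  have := hphi (subsetP sA _ (enum_valP l)) (subsetP sA _ (enum_valP l')).
  rewrite (inj_eq enum_val_inj) /cval => <-.
  by apply: eq_bigr => i _; rewrite /Phi /B !mxE.
by rewrite -{1}(mxrank1 R #|A|) -e mxrankM_maxr.
Qed.

End Dual.

End General.

Lemma hadamard1 (R : realType) n (B : 'M[R]_n) :
  `|\det B| <= \prod_j \sum_i `|B i j|.
Proof.
rewrite -det_tr /determinant.
apply: le_trans (ler_norm_sum _ _ _) _.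
rewrite bigA_distr_bigA /=.
pose H := fun f : {ffun 'I_n -> 'I_n} => \prod_j `|B (f j) j|.
pose pf := fun s : 'S_n => ([ffun i => s i] : {ffun 'I_n -> 'I_n}).
have pfi : {in setT &, injective pf}.
  move=> s t _ _ e; apply/permP => i.
  by have := congr1 (fun f : {ffun 'I_n -> 'I_n} => f i) e; rewrite !ffunE.
apply: (@le_trans _ _ (\sum_(s in setT) H (pf s))).
  rewrite le_eqVlt; apply/orP; left; apply/eqP; apply: eq_big => [s|s _]; first by rewrite in_setT.
  rewrite normrM normrX normrN1 expr1n mul1r normr_prod /H.
  by apply: eq_bigr => i _; rewrite !mxE ffunE.
rewrite -(big_imset H pfi) (bigID (mem (pf @: setT)) predT) /=.
rewrite lerDl; apply: sumr_ge0 => f _; apply: prodr_ge0 => i _; exact: normr_ge0.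
Qed.

Lemma det2x2 (R : comNzRingType) (A : 'M[R]_2) : \det A = A 0 0 * A 1 1 - A 0 1 * A 1 0.
Proof.
rewrite (expand_det_row _ 0) !big_ord_recl big_ord0 /cofactor !det_mx11 !mxE /=.
have e1 : lift 0 0 = 1 :> 'I_2 by apply/val_inj.
have e4 : lift ord0 ord0 = 1 :> 'I_2 by apply/val_inj.
have e5 : lift 1 0 = 0 :> 'I_2 by apply/val_inj.
rewrite e1 ?e4 /= e5 (_ : ord0 = 0) // /bump /= expr0 expr1. ring.
Qed.

Lemma det_block2 (R : comNzRingType) m (B : 'M[R]_(m.+2)) :
  (forall i j : 'I_(m.+2), (2 <= i)%N || (2 <= j)%N -> B i j = (i == j)%:R) ->
  \det B = B 0 0 * B 1 1 - B 0 1 * B 1 0.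
Proof.
move=> hB.
pose ul := \matrix_(i < 2, j < 2) B (lshift m i) (lshift m j).
have eB : B = block_mx ul 0 0 1%:M :> 'M_(2 + m).
  apply/matrixP => i j; rewrite -[i]splitK -[j]splitK.
  case: (split i) => i'; case: (split j) => j' /=.
  - by rewrite block_mxEul /ul mxE.
  - rewrite block_mxEur mxE hB /=; last by rewrite /= orbT.
    by rewrite -val_eqE /=; case: eqP => //; have := ltn_ord i'; lia.
  - rewrite block_mxEdl mxE hB /=; last by [].
    by rewrite -val_eqE /=; case: eqP => //; have := ltn_ord j'; lia.
  - rewrite block_mxEdr mxE hB /=; last by [].
    by rewrite -val_eqE /= eqn_add2l.
rewrite {1}eB (det_ublock ul (0 : 'M_(2, m)) (1%:M : 'M_m)) det1 mulr1 det2x2 !mxE.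
have e0 : lshift m (0 : 'I_2) = 0 by apply/val_inj.
have e1 : lshift m (1 : 'I_2) = 1 by apply/val_inj.
by rewrite e0 e1.
Qed.

Module C.

Section Plane.
Variable R : realType.
Variable k : nat.
Definition a := (2 ^ k)%N.
Definition N := a.*2.
Definition A : R := a%:R.

Lemma a_gt0 : (0 < a)%N. Proof. by rewrite /a expn_gt0. Qed.
Lemma A_gt0 : 0 < A. Proof. by rewrite /A ltr0n a_gt0. Qed.
Lemma A_ge1 : 1 <= A. Proof. by rewrite /A ler1n a_gt0. Qed.
Lemma NE : (N%:R : R) = 2 * A. Proof. by rewrite /N -addnn natrD /A; ring. Qed.

Definition ny (t : nat) : R := if (t <= a)%N then t%:R else (N%:R - t%:R).
Definition xc (t : nat) : R := (A - t%:R) / A.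
Definition yc (t : nat) : R := ny t / A.
Definition det2 s t := xc s * yc t - yc s * xc t.

Lemma det2E s t : det2 s t = ((A - s%:R) * ny t - ny s * (A - t%:R)) / (A * A).
Proof. rewrite /det2 /xc /yc; field; by rewrite lt0r_neq0 // A_gt0. Qed.

Lemma det2_ge0 s t : (s <= t)%N -> (t <= N)%N -> 0 <= det2 s t.
Proof.
move=> st tN; rewrite det2E; apply: divr_ge0; last by rewrite mulr_ge0 // ltW // A_gt0.
have hA := A_gt0; have nE := NE.
have hst : (s%:R : R) <= t%:R by rewrite ler_nat.
have htN : (t%:R : R) <= N%:R by rewrite ler_nat.
have hs0 : (0 : R) <= s%:R by rewrite ler0n.
rewrite /ny; case: ifP => ta; case: ifP => sa.
- have : (t%:R : R) <= A by rewrite /A ler_nat. nra.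
- by exfalso; move: sa ta; lia.
- have h1 : (s%:R : R) <= A by rewrite /A ler_nat.
  have h2 : A <= t%:R by rewrite /A ler_nat; lia.
  nra.
- have h2 : A <= s%:R by rewrite /A ler_nat; lia.
  nra.
Qed.

Lemma det2_gt0 s t : (s < t)%N -> (t <= N)%N -> ~~ ((s == 0%N) && (t == N)) -> 0 < det2 s t.
Proof.
move=> st tN hn; rewrite det2E; apply: divr_gt0; last by rewrite mulr_gt0 // A_gt0.
have hA := A_gt0; have nE := NE.
have hst : (s%:R + 1 : R) <= t%:R by rewrite natr1 ler_nat.
have htN : (t%:R : R) <= N%:R by rewrite ler_nat.
have hs0 : (0 : R) <= s%:R by rewrite ler0n.
rewrite /ny; case: ifP => ta; case: ifP => sa.
- have : (t%:R : R) <= A by rewrite /A ler_nat. nra.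
- by exfalso; move: sa ta; lia.
- have h1 : (s%:R : R) <= A by rewrite /A ler_nat.
  have h2 : A + 1 <= t%:R by rewrite /A natr1 ler_nat; lia.
  have [s0|s0] := boolP (s == 0%N).
    have h3 : (t%:R : R) + 1 <= N%:R by rewrite natr1 ler_nat; move: hn; rewrite s0 /=; lia.
    move/eqP: s0 => ->; rewrite mul0r subr0; nra.
  have h3 : (1 : R) <= s%:R by rewrite ler1n; lia.
  nra.
- have h2 : A <= s%:R by rewrite /A ler_nat; lia.
  nra.
Qed.

Lemma det2_succ t : (t < N)%N -> det2 t t.+1 = A^-1.
Proof.
move=> tN; rewrite det2E /ny -natr1.
have hA : A != 0 by rewrite lt0r_neq0 // A_gt0.
case: ifP => ta; case: ifP => sa.
- by field.
- by exfalso; move: sa ta; lia.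
- have -> : t = a by lia. rewrite NE /A; field; by rewrite -/A.
- rewrite NE; by field.
Qed.

Lemma det2_anti s t : det2 t s = - det2 s t.
Proof. rewrite /det2; ring. Qed.

Lemma det2_xx t : det2 t t = 0.
Proof. rewrite /det2; ring. Qed.

Lemma norm1 t : (t <= N)%N -> `|xc t| + `|yc t| = 1.
Proof.
move=> tN; rewrite /xc /yc /ny.
have hA := A_gt0; have nE := NE.
have htN : (t%:R : R) <= N%:R by rewrite ler_nat.
case: ifP => ta.
  have h : (t%:R : R) <= A by rewrite /A ler_nat.
  rewrite !ger0_norm ?divr_ge0 ?ler0n ?subr_ge0 ?(ltW hA) //.
  by field; rewrite lt0r_neq0.
have h : A <= t%:R by rewrite /A ler_nat; lia.
rewrite ler0_norm ?ger0_norm.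
- by rewrite nE; field; rewrite lt0r_neq0.
- by rewrite divr_ge0 ?subr_ge0 ?(ltW hA).
- by rewrite ler_pdivrMr // mul0r subr_le0.
Qed.

Lemma xa : xc a = 0. Proof. by rewrite /xc -/A subrr mul0r. Qed.
Lemma ya : yc a = 1. Proof. by rewrite /yc /ny leqnn -/A divff // lt0r_neq0 // A_gt0. Qed.

End Plane.

End C.
Import C.

Section Constr.
Variable R : realType.
Variables m k : nat.
Local Notation aa := (C.a k).
Local Notation NN := (C.N k).
Local Notation AA := (C.A R k).
Local Notation x_ := (C.xc R k).
Local Notation y_ := (C.yc R k).
Local Notation d2 := (C.det2 R k).

Definition W : R := ((m.+2) ^ k)%:R / AA.
Local Notation p := (NN.+1 + m).+1.
Lemma pE : p = (NN.+2 + m)%N. Proof. by lia. Qed.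
Definition Xc (j : nat) : R := if (j <= NN)%N then x_ j else if j == NN.+1 then W else 0.
Definition Yc (j : nat) : R := if (j <= NN)%N then y_ j else 0.
Definition Mx : 'M[R]_(m.+2, p) :=
  \matrix_(i, j) (if (i == 0 :> nat) then Xc j else if (i == 1 :> nat) then Yc j
                  else ((i : nat) == ((j : nat) - NN)%N)%:R).

Definition pf (al be : R) : 'cV[R]_(m.+2) :=
  \col_i (if (i == 0 :> nat) then al else if (i == 1 :> nat) then be else 0).
Definition ef (r : 'I_(m.+2)) : 'cV[R]_(m.+2) := \col_i ((i == r)%:R).

Lemma cval_pf al be j : cval Mx (pf al be) j = al * Xc j + be * Yc j.
Proof.
rewrite /cval !big_ord_recl big1 ?addr0; first by rewrite !mxE /=.
by move=> i _; rewrite !mxE /= mul0r.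
Qed.

Lemma cval_ef r j : cval Mx (ef r) j = Mx r j.
Proof.
rewrite /cval (bigD1 r) //= !mxE eqxx mul1r big1 ?addr0 // => i /negbTE ir.
by rewrite mxE ir mul0r.
Qed.

Lemma Xc_e j : (NN.+2 <= j)%N -> Xc j = 0.
Proof. move=> h; rewrite /Xc; case: ifP; first lia. case: ifP => //; lia. Qed.
Lemma Yc_e j : (NN.+2 <= j)%N -> Yc j = 0.
Proof. move=> h; rewrite /Yc; case: ifP => //; lia. Qed.
Lemma Xc_p j : (j <= NN)%N -> Xc j = x_ j.
Proof. by move=> h; rewrite /Xc h. Qed.
Lemma Yc_p j : (j <= NN)%N -> Yc j = y_ j.
Proof. by move=> h; rewrite /Yc h. Qed.

Definition Smax (t : nat) : {set 'I_p} :=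
  [set j : 'I_p | ((j == t :> nat) || (j == t.+1 :> nat) || (NN.+2 <= j))%N].
Definition Fam : {set {set 'I_p}} := [set S : {set 'I_p} | [exists t : 'I_NN, S \subset Smax t]].

Definition phi (t : nat) (i : 'I_p) : 'cV[R]_(m.+2) :=
  if (i == t :> nat) then pf (AA * y_ t.+1) (- (AA * x_ t.+1))
  else if (i == t.+1 :> nat) then pf (- (AA * y_ t)) (AA * x_ t)
  else ef (inord (i - NN)).

Lemma AA_neq0 : AA != 0. Proof. by rewrite lt0r_neq0 // A_gt0. Qed.

Lemma cval_e_row (i j : 'I_p) : (NN.+2 <= i)%N ->
  cval Mx (ef (inord (i - NN))) j = ((i - NN)%N == (j - NN)%N)%:R.
Proof.
move=> hi; rewrite cval_ef mxE inordK; last by have := ltn_ord i; lia.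
case: ifP; first lia. case: ifP => //; lia.
Qed.

Lemma d2_succ t : (t < NN)%N -> AA * d2 t t.+1 = 1.
Proof. by move=> h; rewrite det2_succ // divff // AA_neq0. Qed.

Lemma ord_eq (i j : 'I_p) : (i : nat) = j -> (i == j) = true.
Proof. by move=> h; apply/eqP/val_inj. Qed.
Lemma ord_neq (i j : 'I_p) : (i : nat) <> j -> (i == j) = false.
Proof. by move=> h; apply/negbTE/negP => /eqP e; apply: h; rewrite e. Qed.

Lemma dual_Smax t : (t < NN)%N -> forall i j, i \in Smax t -> j \in Smax t ->
  cval Mx (phi t i) j = (i == j)%:R.
Proof.
move=> tN i j; rewrite !inE /phi => hi hj.
have hA := AA_neq0; have hs := d2_succ tN.
case: ifP => [/eqP it|it].
  rewrite cval_pf.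
  case/orP: hj => [/orP [] /eqP jt|je].
  - rewrite Xc_p ?Yc_p ?jt ?ord_eq; try lia.
    by transitivity (AA * d2 t t.+1); [rewrite /det2; ring | rewrite hs].
  - rewrite Xc_p ?Yc_p ?jt ?ord_neq; try lia.
    rewrite /=; ring.
  - rewrite Xc_e ?Yc_e ?ord_neq //; try lia.
    rewrite /=; ring.
case: ifP => [/eqP it1|it1].
  rewrite cval_pf.
  case/orP: hj => [/orP [] /eqP jt|je].
  - rewrite Xc_p ?Yc_p ?jt ?ord_neq; try lia.
    rewrite /=; ring.
  - rewrite Xc_p ?Yc_p ?jt ?ord_eq; try lia.
    by transitivity (AA * d2 t t.+1); [rewrite /det2; ring | rewrite hs].
  - rewrite Xc_e ?Yc_e ?ord_neq //; try lia.
    rewrite /=; ring.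
have ie : (NN.+2 <= i)%N by move: hi it it1; lia.
rewrite cval_e_row //.
case/orP: hj => [/orP [] /eqP jt|je].
- rewrite ord_neq; last lia.
  by case: eqP => //; lia.
- rewrite ord_neq; last lia.
  by case: eqP => //; lia.
- case: (eqVneq (i : nat) j) => [e|ne].
    by rewrite ord_eq // e eqxx.
  rewrite ord_neq; last by apply/eqP.
  by case: eqP => //; lia.
Qed.

Definition sepc t u := pf (y_ t.+1 + y_ u) (- (x_ t.+1 + x_ u)).
Lemma cval_sepc_p t u (j : 'I_p) : (j <= NN)%N -> cval Mx (sepc t u) j = d2 j t.+1 + d2 j u.
Proof. by move=> h; rewrite cval_pf Xc_p ?Yc_p // /det2; ring. Qed.
Lemma cval_sepc_e t u (j : 'I_p) : (NN.+2 <= j)%N -> cval Mx (sepc t u) j = 0.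
Proof. by move=> h; rewrite cval_pf Xc_e ?Yc_e // !mulr0 addr0. Qed.

Lemma Ainv_gt0 : 0 < AA^-1. Proof. by rewrite invr_gt0 A_gt0. Qed.

Lemma max_inter_lt t u : (t < u)%N -> (u < NN)%N ->
  vsubset (vinter (mcone Mx (Smax t)) (mcone Mx (Smax u))) (mcone Mx (Smax t :&: Smax u)).
Proof.
move=> tu uN; have hi := Ainv_gt0.
apply: (@sep_inter _ _ _ _ _ _ (sepc t u)) => j; rewrite !inE.
- move=> hj hnj; rewrite cval_sepc_p; last by move: hj hnj; lia.
  case: (eqVneq (j : nat) t) => [->|jt].
    rewrite det2_succ; last lia.
    have := det2_ge0 R (ltnW tu) (ltnW uN); lra.
  have -> : (j : nat) = t.+1 by move: hj hnj jt; lia.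
  rewrite det2_xx add0r; apply: det2_gt0; lia.
- move=> hj hnj; rewrite cval_sepc_p; last by move: hj hnj uN; lia.
  rewrite (det2_anti R k _ j) (det2_anti R k _ j).
  case: (eqVneq (j : nat) u) => [e|ju].
    rewrite e det2_xx oppr0 addr0 oppr_lt0; apply: det2_gt0; lia.
  have -> : (j : nat) = u.+1 by move: hj hnj ju; lia.
  rewrite det2_succ //.
  have : 0 <= d2 t.+1 u.+1 by apply: det2_ge0; lia.
  lra.
- move=> hj hj'; case: (boolP (NN.+2 <= j)%N) => je; first by rewrite cval_sepc_e.
  rewrite cval_sepc_p; last by move: hj hj' je tu uN; lia.
  have -> : (j : nat) = u by move: hj hj' je tu; lia.
  have -> : t.+1 = u by move: hj hj' je tu; lia.
  by rewrite det2_xx addr0.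
Qed.

Lemma max_inter t u : (t < NN)%N -> (u < NN)%N ->
  vsubset (vinter (mcone Mx (Smax t)) (mcone Mx (Smax u))) (mcone Mx (Smax t :&: Smax u)).
Proof.
move=> tN uN; case: (ltngtP t u) => [tu|ut|->].
- exact: max_inter_lt.
- move=> x /vinterC /(max_inter_lt ut tN); by rewrite setIC.
- by rewrite setIid => x [].
Qed.

Lemma Smax_Fam t : (t < NN)%N -> Smax t \in Fam.
Proof. move=> h; rewrite inE; apply/existsP; exists (Ordinal h); exact: subxx. Qed.

Lemma FamP (S : {set 'I_p}) : S \in Fam -> exists2 t, (t < NN)%N & S \subset Smax t.
Proof. by rewrite inE => /existsP [t h]; exists t. Qed.

Lemma Fam_sub (S T : {set 'I_p}) : S \in Fam -> T \subset S -> T \in Fam.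
Proof.
move=> /FamP [t tN sS] sT; rewrite inE; apply/existsP; exists (Ordinal tN).
exact: subset_trans sT sS.
Qed.

Lemma dual_t t : (t < NN)%N -> forall i j, i \in Smax t -> j \in Smax t ->
  cval Mx (phi t i) j = (i == j)%:R.
Proof. exact: dual_Smax. Qed.

Lemma mem_inter (S T : {set 'I_p}) : S \in Fam -> T \in Fam ->
  vsubset (vinter (mcone Mx S) (mcone Mx T)) (mcone Mx (S :&: T)).
Proof.
move=> /FamP [t tN sS] /FamP [u uN sT] x [xS xT].
have x1 : mcone Mx (Smax t :&: Smax u) x.
  apply: (max_inter tN uN); split; [exact: cone_sub sS _ xS | exact: cone_sub sT _ xT].
have x2 : mcone Mx (S :&: (Smax t :&: Smax u)) x.
  apply: (dual_inter (dual_t tN)) => //; first by rewrite subIset // subxx.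
have x3 : mcone Mx (T :&: (S :&: (Smax t :&: Smax u))) x.
  apply: (dual_inter (dual_t uN)) => //.
  by apply/subsetP => j; rewrite !in_setI => /and3P [].
move: x3; apply: cone_sub; apply/subsetP => j; rewrite !in_setI.
by case/and4P => -> -> _ _.
Qed.

Lemma inter_veq (S T : {set 'I_p}) : S \in Fam -> T \in Fam ->
  veq (vinter (mcone Mx S) (mcone Mx T)) (mcone Mx (S :&: T)).
Proof.
move=> hS hT x; split; first exact: mem_inter.
by move=> h; split; apply: cone_sub h; apply/subsetP => j; rewrite in_setI => /andP [].
Qed.

Lemma gen_nonzero t (j : 'I_p) : (t < NN)%N -> j \in Smax t -> ~ mcone Mx set0 (Mx *m dvec R j).
Proof.
move=> tN jS [lam [_ [h2 e]]].
have := ctx_dvec Mx (phi t j) j; rewrite dual_t // eqxx e ctx big1 => [|i _].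
  by move/eqP; rewrite eq_sym oner_eq0.
by rewrite h2 ?inE // mul0r.
Qed.

Lemma cone_inj (S T : {set 'I_p}) : S \in Fam -> T \in Fam ->
  vsubset (mcone Mx S) (mcone Mx T) -> S \subset T.
Proof.
move=> hS hT sub; apply/subsetP => j jS; apply/negPn/negP => jT.
have [t tN sS] := FamP hS.
apply: (gen_nonzero tN (subsetP sS _ jS)).
have -> : set0 = [set j] :&: T.
  apply/setP => i; rewrite !inE; case: eqP => // ->; by rewrite (negbTE jT).
apply: mem_inter; first by apply: (Fam_sub hS); rewrite sub1set.
  done.
split; first exact/cone_gen/set11.
exact/sub/cone_gen.
Qed.

Definition Eset : {set 'I_p} := [set j : 'I_p | (NN.+2 <= j)%N].

Lemma card_E : #|Eset| = m.
Proof.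
pose f := fun i : 'I_m => (inord (NN.+2 + i) : 'I_p).
have fi : injective f.
  move=> i j /(congr1 val); rewrite /f /= !inordK;
    try (have := ltn_ord i; have := ltn_ord j; lia).
  by move=> e; apply/val_inj => /=; lia.
have -> : Eset = f @: setT.
  apply/setP => j; rewrite inE; apply/idP/imsetP.
    move=> hj; have hm : (j - NN.+2 < m)%N by have := ltn_ord j; have := pE; lia.
    exists (Ordinal hm) => //; apply/val_inj; rewrite /f /= inordK /=; lia.
  by case=> i _ ->; rewrite /f inordK //; have := ltn_ord i; lia.
by rewrite card_imset // cardsT card_ord.
Qed.

Lemma inordt t : (t <= NN.+1 + m)%N -> ((inord t : 'I_p) : nat) = t.
Proof. by move=> h; rewrite inordK. Qed.

Lemma Smax_eq t : (t < NN)%N -> Smax t = inord t |: (inord t.+1 |: Eset).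
Proof.
move=> tN; apply/setP => j; rewrite !inE -!val_eqE /= !inordt; lia.
Qed.

Lemma card_Smax t : (t < NN)%N -> #|Smax t| = m.+2.
Proof.
move=> tN; rewrite Smax_eq // !cardsU1 card_E !inE -!val_eqE /= !inordt; lia.
Qed.

Lemma Smax_succ t : (t.+1 < NN)%N -> Smax t :&: Smax t.+1 = inord t.+1 |: Eset.
Proof.
move=> tN; apply/setP => j; rewrite !inE -!val_eqE /= !inordt; lia.
Qed.

Lemma card_succ t : (t.+1 < NN)%N -> #|Smax t :&: Smax t.+1| = m.+1.
Proof.
move=> tN; rewrite Smax_succ // cardsU1 card_E !inE /= inordt; last lia.
by rewrite (_ : (NN.+2 <= t.+1)%N = false) //; lia.
Qed.

Lemma card_far t u : (t.+2 <= u)%N -> (#|Smax t :&: Smax u| <= m)%N.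
Proof.
move=> tu; apply: (@leq_trans #|Eset|); last by rewrite card_E. apply: subset_leq_card; apply/subsetP => j.
rewrite !inE; lia.
Qed.

Lemma fan_ok : is_fan Mx Fam.
Proof.
split.
- move=> S T hS hT e; apply/eqP; rewrite eqEsubset.
  by rewrite (cone_inj hS hT) ?(cone_inj hT hS) // => x /e.
- move=> S F hS [c [hc e]].
  exists [set j in S | cval Mx c j == 0].
    by apply: (Fam_sub hS); apply/subsetP => j; rewrite inE => /andP [].
  exact: veq_sym (veq_trans e (face_lemma hc)).
- move=> S T hS hT; have [t tN sS] := FamP hS; have [u uN sT] := FamP hT.
  split.
    have [|c [hc e]] := dual_face (dual_t tN) (A := S :&: T) _ sS.
      by apply/subsetP => j; rewrite in_setI => /andP [].
    by exists c; split=> //; apply: veq_trans (inter_veq hS hT) e.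
  have [|c [hc e]] := dual_face (dual_t uN) (A := T :&: S) _ sT.
    by apply/subsetP => j; rewrite in_setI => /andP [].
  exists c; split=> //; apply: veq_trans (inter_veq hS hT) _.
  by rewrite setIC.
- move=> S hS hmax; have [t tN sS] := FamP hS.
  have e := hmax _ (Smax_Fam tN) (cone_sub sS).
  have -> : S = Smax t.
    by apply/eqP; rewrite eqEsubset sS (cone_inj (Smax_Fam tN) hS) // => x /e.
  have := dual_has_dim (dual_t tN) (subxx (Smax t)); by rewrite card_Smax.
Qed.

Lemma simpl_ok : is_simplicial Mx Fam.
Proof.
move=> S hS hd; have [t tN sS] := FamP hS.
apply/eqP; rewrite eqn_leq (has_dim_le hd) andbT.
by rewrite -(card_Smax tN) subset_leq_card.
Qed.

Lemma GammaP S : Gamma_n Mx Fam S -> exists2 t, (t < NN)%N & S = Smax t.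
Proof.
move=> [hS hd]; have [t tN sS] := FamP hS; exists t => //.
apply/eqP; rewrite eqEcard sS card_Smax //; have := simpl_ok hS hd; rewrite /= => ->; exact: ltnSn.
Qed.

Lemma Gamma_Smax t : (t < NN)%N -> Gamma_n Mx Fam (Smax t).
Proof.
move=> tN; split; first exact: Smax_Fam.
have := dual_has_dim (dual_t tN) (subxx (Smax t)); by rewrite card_Smax.
Qed.

Lemma adj_succ t : (t.+1 < NN)%N ->
  fan_adj Mx (Smax t) (Smax t.+1) /\ fan_adj Mx (Smax t.+1) (Smax t).
Proof.
move=> tN; have tN' : (t < NN)%N by lia.
have h : has_dim (vinter (mcone Mx (Smax t)) (mcone Mx (Smax t.+1))) m.+1.
  apply: has_dim_veq (veq_sym (inter_veq (Smax_Fam tN') (Smax_Fam tN))) _.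
  have := dual_has_dim (dual_t tN') (subsetIl (Smax t) (Smax t.+1)).
  by rewrite card_succ.
split=> //; exact: has_dim_veq (vinterC _ _) h.
Qed.

Lemma adj_far t u : (t.+2 <= u)%N -> (u < NN)%N ->
  ~ fan_adj Mx (Smax t) (Smax u) /\ ~ fan_adj Mx (Smax u) (Smax t).
Proof.
move=> tu uN; have tN : (t < NN)%N by lia.
have h : ~ has_dim (vinter (mcone Mx (Smax t)) (mcone Mx (Smax u))) m.+1.
  move=> /(has_dim_veq (inter_veq (Smax_Fam tN) (Smax_Fam uN))) /has_dim_le.
  by have := card_far tu; lia.
split=> // /(has_dim_veq (vinterC _ _)); exact: h.
Qed.

Local Notation V := (Gamma_n Mx Fam).
Local Notation E := (fan_adj Mx).

Lemma reach_mono d d' x y : (d <= d')%N -> reach V E d x y -> reach V E d' x y.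
Proof.
move=> /subnK <-; elim: (d' - d)%N => [|e IH] //= h; left; exact: IH.
Qed.

Lemma walk i t : (t + i < NN)%N ->
  reach V E i (Smax t) (Smax (t + i)) /\ reach V E i (Smax (t + i)) (Smax t).
Proof.
elim: i t => [|i IH] t h; first by rewrite addn0.
split.
  right; exists (Smax (t + i)); split; first by apply: Gamma_Smax; lia.
  split; first by case: (IH t _) => //; lia.
  rewrite addnS; by case: (adj_succ (t := t + i) _) => //; lia.
right; exists (Smax t.+1); split; first by apply: Gamma_Smax; lia.
have e : (t + i.+1 = t.+1 + i)%N by lia.
split; first by rewrite e; case: (IH t.+1 _) => //; lia.
by case: (adj_succ (t := t) _) => //; lia.
Qed.

Lemma reach_low d y : reach V E d (Smax 0) y ->
  forall b, (b < NN)%N -> y = Smax b -> (b <= d)%N.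
Proof.
elim: d y => [|d IH] y /=.
  move=> <- b bN e; have : (inord 0 : 'I_p) \in Smax b by rewrite -e inE inordt.
  by rewrite inE inordt //; lia.
case=> [h b bN e|[w [[hw1 hw2] [hr ha]]] b bN e].
  by have := IH y h b bN e; lia.
have [c cN ew] := GammaP (conj hw1 hw2).
have := IH w hr c cN ew.
move=> cd; case: (leqP b c.+1) => bc; first lia.
have [h1 _] := adj_far (t := c) (u := b) bc bN.
by rewrite ew e in ha.
Qed.

Lemma diam_ok : graph_diam V E (NN - 1).
Proof.
split.
  move=> u v /GammaP [t tN ->] /GammaP [s sN ->].
  case: (leqP t s) => ts.
    have := walk (i := s - t) (t := t); rewrite subnKC //; case=> [|h _]; first lia.
    apply: reach_mono h; lia.
  have := walk (i := t - s) (t := s); rewrite subnKC; last lia; case=> [|_ h]; first lia.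
  apply: reach_mono h; lia.
move=> d' h; have NN0 : (0 < NN)%N by rewrite /C.N double_gt0 a_gt0.
apply: (reach_low (h _ _ (Gamma_Smax NN0) (Gamma_Smax (_ : NN - 1 < NN)%N))) => //; lia.
Qed.

Definition widx : 'I_p := inord NN.+1.
Definition rho (j : 'I_p) : R := \sum_i `|Mx i j|.

Lemma Mx_e (i : 'I_(m.+2)) (j : 'I_p) : (NN.+2 <= j)%N -> Mx i j = ((i : nat) == (j - NN)%N)%:R.
Proof.
move=> h; rewrite mxE; case: ifP => [/eqP i0|_]; first by rewrite Xc_e // i0; case: eqP => //; lia.
case: ifP => [/eqP i1|_] //; by rewrite Yc_e // i1; case: eqP => //; lia.
Qed.

Lemma Mx_low (i : 'I_(m.+2)) (j : 'I_p) : (j <= NN.+1)%N -> (2 <= i)%N -> Mx i j = 0.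
Proof.
move=> hj hi; rewrite mxE; case: ifP => [/eqP|_]; first lia.
case: ifP => [/eqP|_]; first lia.
by case: eqP => //; lia.
Qed.

Lemma rho_lo (j : 'I_p) : (j <= NN.+1)%N -> rho j = `|Xc j| + `|Yc j|.
Proof.
move=> h; rewrite /rho !big_ord_recl big1 ?addr0; first by rewrite !mxE.
by move=> i _; rewrite Mx_low ?normr0.
Qed.

Lemma W_ge0 : 0 <= W. Proof. by rewrite /W divr_ge0 ?ler0n // ltW // A_gt0. Qed.

Lemma W_ge1 : 1 <= W.
Proof.
rewrite /W ler_pdivlMr ?A_gt0 // mul1r /C.A /C.a ler_nat.
elim: k => // k' IH; rewrite !expnS leq_mul //.
Qed.

Lemma rho_w : rho widx = W.
Proof.
rewrite rho_lo /widx ?inordt; try lia.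
rewrite /Xc /Yc; case: ifP; first lia. by rewrite eqxx normr0 addr0 ger0_norm // W_ge0.
Qed.

Lemma rho_e (j : 'I_p) : (NN.+2 <= j)%N -> rho j = 1.
Proof.
move=> h; rewrite /rho (bigD1 (inord (j - NN))) //= Mx_e // inordK; last by have := ltn_ord j; lia.
rewrite eqxx normr1 big1 ?addr0 // => i ij; rewrite Mx_e //.
case: eqP; last by rewrite normr0.
move=> e; move: ij; rewrite -val_eqE /= inordK; last by have := ltn_ord j; lia.
by rewrite e eqxx.
Qed.

Lemma rho_le1 (j : 'I_p) : j != widx -> rho j <= 1.
Proof.
move=> jw; case: (leqP j NN) => h.
  have h1 : (j <= NN.+1)%N by lia.
  by rewrite rho_lo // Xc_p // Yc_p // C.norm1.
case: (leqP NN.+2 j) => h2; first by rewrite rho_e.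
exfalso; move/negP: jw; apply; apply/eqP/val_inj; rewrite /widx /= inordt; lia.
Qed.

Lemma rho_ge0 (j : 'I_p) : 0 <= rho j.
Proof. by apply: sumr_ge0 => i _; apply: normr_ge0. Qed.

Lemma det_bound (f : {ffun 'I_(m.+2) -> 'I_p}) : `|\det (colsub f Mx)| <= W.
Proof.
case: (boolP [exists i1, exists i2, (i1 != i2) && (f i1 == f i2)]).
  move=> /existsP [i1 /existsP [i2 /andP [ne /eqP e]]].
  rewrite -det_tr (determinant_alternate ne) ?normr0 ?W_ge0 // => j.
  by rewrite !mxE e.
move=> hn; have fi : injective f.
  move=> i1 i2 e; apply/eqP; apply/negPn/negP => ne; move/negP: hn; apply.
  by apply/existsP; exists i1; apply/existsP; exists i2; rewrite ne e eqxx.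
apply: le_trans (hadamard1 _) _.
have -> : \prod_j \sum_i `|colsub f Mx i j| = \prod_j rho (f j).
  by apply: eq_bigr => j _; apply: eq_bigr => i _; rewrite mxE.
case: (pickP (fun j => f j == widx)) => [j0 /eqP hj0|none].
  rewrite (bigD1 j0) //= hj0 rho_w -{2}[W]mulr1 ler_wpM2l ?W_ge0 //.
  apply: prodr_ile1 => j jj0; rewrite rho_ge0 rho_le1 //.
  by apply: contra jj0 => /eqP e; apply/eqP; apply: fi; rewrite e hj0.
apply: le_trans W_ge1; apply: prodr_ile1 => j _.
by rewrite rho_ge0 rho_le1 // none.
Qed.

Definition fmk (c0 c1 : nat) : {ffun 'I_(m.+2) -> 'I_p} :=
  [ffun j : 'I_(m.+2) => if (j == 0 :> nat) then inord c0 else if (j == 1 :> nat) then inord c1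
                          else inord (NN + j)].

Lemma det_fmk c0 c1 : (c0 <= NN.+1)%N -> (c1 <= NN.+1)%N ->
  \det (colsub (fmk c0 c1) Mx) = Xc c0 * Yc c1 - Xc c1 * Yc c0.
Proof.
move=> h0 h1; rewrite det_block2.
  by rewrite !mxE !ffunE /= !inordt //; lia.
move=> i j hij; rewrite mxE ffunE.
case: ifP => [/eqP j0|j0].
  rewrite Mx_low ?inordt //; try lia.
  by case: eqP => // /(congr1 val) /=; lia.
case: ifP => [/eqP j1|j1].
  rewrite Mx_low ?inordt //; try lia.
  by case: eqP => // /(congr1 val) /=; lia.
have jb : (j < m.+2)%N := ltn_ord j.
rewrite Mx_e inordt; try lia.
congr (_%:R); rewrite -val_eqE /=; apply/eqP; case: eqP; lia.
Qed.

Lemma Delta_eq : Delta Mx = W.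
Proof.
apply/le_anti/andP; split.
  by apply: bigmax_le => [|f _]; [exact: W_ge0 | exact: det_bound].
have a_le : (aa <= NN)%N by rewrite /C.N -addnn leq_addr.
apply: le_trans (le_bigmax_cond _ (j := fmk NN.+1 aa) _ _) => //.
rewrite det_fmk //; last lia.
rewrite (Xc_p a_le) (Yc_p a_le) xa ya /Xc /Yc; case: ifP; first lia.
by rewrite eqxx mulr1 mul0r subr0 ger0_norm // W_ge0.
Qed.

Definition ft t := fmk t t.+1.

Lemma ft_val t (i : 'I_(m.+2)) : (t < NN)%N ->
  (ft t i : nat) = if (i == 0 :> nat) then t else if (i == 1 :> nat) then t.+1 else (NN + i)%N.
Proof.
move=> tN; have hi := ltn_ord i; rewrite ffunE.
by case: ifP => _; [|case: ifP => _]; rewrite inordt //; lia.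
Qed.

Lemma ft_inj t : (t < NN)%N -> injective (ft t).
Proof.
move=> tN i j /(congr1 (@nat_of_ord _)); rewrite !ft_val // => e; apply: ord_inj.
by move: e; do ![case: eqP => ?]; lia.
Qed.

Lemma ft_img t : (t < NN)%N -> ft t @: setT = Smax t.
Proof.
move=> tN; apply/eqP; rewrite eqEcard card_imset; last exact: ft_inj.
rewrite cardsT card_ord card_Smax // leqnn andbT.
apply/subsetP => x /imsetP [i _ ->]; rewrite inE ft_val //.
by have := ltn_ord i; case: ifP => [/eqP h0|h0]; [|case: ifP => [/eqP h1|h1]]; lia.
Qed.

Lemma det_ft t : (t < NN)%N -> \det (colsub (ft t) Mx) = AA^-1.
Proof.
move=> tN; rewrite /ft det_fmk; try lia.
rewrite !Xc_p ?Yc_p; try lia.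
by rewrite -(det2_succ R tN) /det2; ring.
Qed.

Lemma absdet_Smax t : (t < NN)%N -> absdet Mx (Smax t) = AA^-1.
Proof.
move=> tN; have hA := Ainv_gt0.
apply/le_anti/andP; split; last first.
  apply: le_trans (le_bigmax_cond _ (j := ft t) _ _); last by rewrite ft_img.
  by rewrite det_ft // ger0_norm // ltW.
apply: bigmax_le => [|f /eqP hf]; first exact: ltW.
have fi : injective f.
  have : #|f @: setT| == #|[set: 'I_(m.+2)]| by rewrite hf card_Smax // cardsT card_ord.
  by move/imset_injP => h x y e; apply: h; rewrite ?inE.
pose sg := fun j => odflt j [pick l | ft t l == f j].
have sgE : forall j, ft t (sg j) = f j.
  move=> j; rewrite /sg; case: pickP => [l /eqP //| none] /=.
  have : f j \in ft t @: setT by rewrite ft_img // -hf imset_f ?inE.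
  by case/imsetP => l _ e; move: (none l); rewrite e eqxx.
have sgi : injective sg by move=> x y e; apply: fi; rewrite -!sgE e.
pose s := perm sgi.
have -> : colsub f Mx = col_perm s (colsub (ft t) Mx).
  by apply/matrixP => i j; rewrite !mxE permE sgE.
rewrite col_permE det_mulmx det_perm det_ft // normrM normrX normrN1 expr1n mulr1.
by rewrite ger0_norm // ltW.
Qed.

Lemma Dmin_eq : Delta_min Mx Fam = AA^-1.
Proof.
rewrite /Delta_min; apply/le_anti/andP; split.
  have NN0 : (0 < NN)%N by rewrite /C.N double_gt0 a_gt0.
  have h : (Smax 0 \in Fam) && `[< has_dim (mcone Mx (Smax 0)) m.+2 >].
    by have [h1 h2] := Gamma_Smax NN0; rewrite h1; apply/asboolP.
  have := bigmin_le_cond (Delta Mx) (j := Smax 0) (P := fun S => (S \in Fam) && `[< has_dim (mcone Mx S) m.+2 >]) (absdet Mx) h. by rewrite absdet_Smax.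
apply: le_bigmin => [|S /andP [hS /asboolP hd]].
  rewrite Delta_eq; apply: le_trans W_ge1; rewrite invf_le1 ?A_gt0 //; exact: A_ge1.
have [t tN ->] := GammaP (conj hS hd); by rewrite absdet_Smax.
Qed.

End Constr.

Lemma arith (R : realType) m k :
  ((2 ^ k.+1 - 1)%N%:R : R) =
  2 * powR ((W R m k) / (C.A R k)^-1) (1 / (ln ((m.+2)%:R : R) / ln 2)) - 1.
Proof.
have hA : C.A R k != 0 by rewrite lt0r_neq0 // A_gt0.
have -> : W R m k / (C.A R k)^-1 = ((m.+2)%:R ^+ k : R).
  by rewrite /W invrK -mulrA mulVf // mulr1 natrX.
have L0 : 0 < ln ((m.+2)%:R : R) by apply: ln_gt0; rewrite ltr1n.
have L2 : 0 < ln (2 : R) by apply: ln_gt0; rewrite ltr1n.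
rewrite /powR expf_eq0 (negbTE (lt0r_neq0 (ltr0Sn _ _))) andbF lnXn ?ltr0Sn //.
have -> : 1 / (ln (m.+2)%:R / ln 2) * (ln ((m.+2)%:R : R) *+ k) = k%:R * ln 2.
  rewrite -mulr_natr; field; by rewrite mul1r !lt0r_neq0.
by rewrite (expRM_natl k (ln (2:R))) lnK ?posrE // natrB ?expn_gt0 // natrX exprS.
Qed.

Theorem proposition6 (R : realType) (n : nat) (hn : (2 <= n)%N) :
  forall k : nat, exists (p : nat) (M : 'M[R]_(n, p)) (Fam : {set {set 'I_p}}),
    [/\ is_fan M Fam, is_simplicial M Fam,
        graph_diam (Gamma_n M Fam) (fan_adj M) (2 ^ k.+1 - 1)%N &
        ((2 ^ k.+1 - 1)%N%:R : R) =
          2 * powR (Delta M / Delta_min M Fam) (1 / (ln (n%:R : R) / ln 2)) - 1].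
Proof.
case: n hn => [|[|m]] // _ k.
exists _, (Mx R m k), (Fam m k); split.
- exact: fan_ok.
- exact: simpl_ok.
- have -> : (2 ^ k.+1)%N = C.N k by rewrite /C.N /C.a expnS mul2n.
  exact: diam_ok.
- rewrite Delta_eq Dmin_eq; exact: (arith R m k).
Qed.
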